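(* Let $(\mathcal W,\rhd)$ be a $\lambda$A-frame and $\eta$ a hereditary type environment. If $\gamma\vdash A\preceq B$ is derivable and $\eta(X)_p\subseteq\eta(Y)_p$ for every $p\in\mathcal W$ and every pair $X\preceq Y$ in $\gamma$, then $\mathcal I[A]^\eta_p\subseteq\mathcal I[B]^\eta_p$ for every $p\in\mathcal W$.
   Context: Type expressions: fix a countably infinite set of type variables $X,Y,Z,\dots$. Pseudo type expressions are generated by $A::=X\mid A\to A\mid \bullet A\mid \mu X.A$ ($\mu$ binds $X$; $\alpha$-convertible expressions are identified; $\to$ associates to the right; $\bullet$ binds tighter than $\to$, which binds tighter than $\mu$). $A[B/X]$ denotes capture-avoiding substitution. $\top$ abbreviates $\mu X.\bullet X$, and $\bullet^n A$ denotes $A$ prefixed by $n$ copies of $\bullet$. The tail $t(A)$ is defined by $t(X)=X$, $t(A\to B)=t(B)$, $t(\bullet A)=\bullet t(A)$, $t(\mu X.A)=\mu X.t(A)$; it always has the form $\bullet^{m_0}\mu X_1.\bullet^{m_1}\mu X_2.\cdots\mu X_n.\bullet^{m_n}Y$. $A$ is a $\top$-variant iff $Y=X_i$ for some $1\le i\le n$ with $X_i\notin\{X_{i+1},\dots,X_n\}$ and $m_i+\dots+m_n\ge 1$. $A$ is proper in $X$ iff: a variable $Y$ is proper in $X$ iff $Y\neq X$; $\bullet A$ is always proper in $X$; $A\to B$ is proper in $X$ iff both $A,B$ are proper in $X$ or $B$ is a $\top$-variant; for $Y\ne X$, $\mu Y.A$ is proper in $X$ iff $A$ is proper in $X$ or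 $\mu Y.A$ is a $\top$-variant. Type expressions are the least set of pseudo type expressions containing all type variables, closed under $\to$ and $\bullet$, and containing $\mu X.A$ whenever it contains $A$ and $A$ is proper in $X$. Equality: $\cong$ is the least relation on type expressions such that: $A\cong A$; $A\cong B$ implies $B\cong A$; $A\cong B$ and $B\cong C$ imply $A\cong C$; $A\cong B$ implies $\bullet A\cong\bullet B$; $A\cong C$ and $B\cong D$ imply $A\to B\cong C\to D$; $A\to\top\cong\top$; $\mu X.A\cong A[\mu X.A/X]$; and if $A\cong C[A/X]$ with $C$ proper in $X$, then $A\cong\mu X.C$. $\simeq$ is the least relation satisfying the same closure conditions and additionally $\bullet(A\to B)\simeq\bullet A\to\bullet B$. Subtyping: a subtyping assumption $\gamma$ is a finite set of pairs $X\preceq Y$ of type variables in which each type variable occurs at most once; $FTV(\gamma)$ is the set of variables occurring in it. Judgments $\gamma\vdash A\preceq B$ are derived by the rules: $\gamma\cup\{X\preceq Y\}\vdash X\preceq Y$; $\gamma\vdash A\preceq\top$; from $A\simeq B$ infer $\gamma\vdash A\preceq B$; from $\gamma_1\vdash A\preceq B$ and $\gamma_2\vdash B\preceq C$ infer $\gamma_1\cup\gamma_2\vdash A\preceq C$; from $\gamma\vdash A\preceq B$ infer $\gamma\vdash\bullet A\preceq\bullet B$; from $\gamma_1\vdash A'\preceq A$ and $\gamma_2\vdash B\preceq B'$ infer $\gamma_1\cup\gamma_2\vdash A\to B\preceq A'\to B'$; from $\gamma\cup\{X\preceq Y\}\vdash A\preceq B$ infer $\gamma\vdash\mu X.A\preceq\mu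 Y.B$, provided $X\notin FTV(\gamma)\cup FTV(B)$, $Y\notin FTV(\gamma)\cup FTV(A)$, $A$ is proper in $X$ and $B$ is proper in $Y$; and $\gamma\vdash A\preceq\bullet A$. All sets $\gamma\cup\{X\preceq Y\}$, $\gamma_1\cup\gamma_2$ must be well-formed subtyping assumptions. $A\preceq B$ means $\{\}\vdash A\preceq B$ is derivable. Semantics: a syntactical $\lambda$-algebra $(\mathcal V,\cdot,[\![-]\!])$ consists of a nonempty set $\mathcal V$, a map $\cdot:\mathcal V\times\mathcal V\to\mathcal V$, and values $[\![M]\!]_\rho\in\mathcal V$ for untyped $\lambda$-terms $M$ and maps $\rho$ from individual variables to $\mathcal V$, such that $[\![x]\!]_\rho=\rho(x)$, $[\![MN]\!]_\rho=[\![M]\!]_\rho\cdot[\![N]\!]_\rho$, $[\![\lambda x.M]\!]_\rho\cdot v=[\![M]\!]_{\rho[v/x]}$, $[\![M]\!]_\rho$ depends only on $\rho$ restricted to free variables of $M$, and $M=_\beta N$ implies $[\![M]\!]_\rho=[\![N]\!]_\rho$; fix one. A well-founded frame is a pair $(\mathcal W,\rhd)$ with $\mathcal W$ nonempty and $\rhd$ a binary relation on $\mathcal W$ admitting no infinite chain $p_0\rhd p_1\rhd p_2\rhd\cdots$; $\trianglerighteq$ denotes the reflexive-transitive closure of $\rhd$. $\rhd$ is locally linear if whenever $p\rhd q$ there is $r$ with $p\trianglerighteq r\rhd q$ such that $r\rhd s$ implies $q\trianglerighteq s$ for all $s$. A $\lambda$A-frame is a well-founded frame whose $\rhd$ is locally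 linear. A type environment $\eta$ assigns a set $\eta(X)_p\subseteq\mathcal V$ to each type variable $X$ and world $p$; it is hereditary if $p\rhd q$ implies $\eta(X)_p\subseteq\eta(X)_q$. For hereditary $\eta$, $\mathcal I[A]^\eta_p\subseteq\mathcal V$ is defined (by well-founded induction on $p$ and the syntactic rank of $A$) by: $\mathcal I[A]^\eta_p=\mathcal V$ if $A$ is a $\top$-variant; otherwise $\mathcal I[X]^\eta_p=\eta(X)_p$; $\mathcal I[\bullet A]^\eta_p=\{u\mid u\in\mathcal I[A]^\eta_q\text{ for all }q\text{ with }p\rhd q\}$; $\mathcal I[A\to B]^\eta_p=\{u\mid \text{for all }q\text{ with }p\trianglerighteq q\text{ and all }v\in\mathcal I[A]^\eta_q,\ u\cdot v\in\mathcal I[B]^\eta_q\}$; $\mathcal I[\mu X.A]^\eta_p=\mathcal I[A[\mu X.A/X]]^\eta_p$. *)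

(* Defs.v *)
From Stdlib Require Import List Arith Relations.
Import ListNotations.

(* Type expressions, locally nameless: free type variables are named   *)
(* by nat (a countably infinite set), mu-bound variables are de Bruijn *)
(* indices, so alpha-convertible expressions are identified.           *)

Inductive ty : Type :=
| TFV  : nat -> ty
| TBV  : nat -> ty
| TArr : ty -> ty -> ty
| TLat : ty -> ty
| TMu  : ty -> ty.          (* mu X. A  (body uses TBV 0 for X) *)

Fixpoint open_rec (k : nat) (U : ty) (A : ty) : ty :=
  match A with
  | TFV x => TFV x
  | TBV i => if Nat.eqb i k then U else TBV i
  | TArr A1 A2 => TArr (open_rec k U A1) (open_rec k U A2)
  | TLat A1 => TLat (open_rec k U A1)
  | TMu A1 => TMu (open_rec (S k) U A1)
  end.

Definition open (A U : ty) : ty := open_rec 0 U A.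

Fixpoint close_rec (k : nat) (x : nat) (A : ty) : ty :=
  match A with
  | TFV y => if Nat.eqb y x then TBV k else TFV y
  | TBV i => TBV i
  | TArr A1 A2 => TArr (close_rec k x A1) (close_rec k x A2)
  | TLat A1 => TLat (close_rec k x A1)
  | TMu A1 => TMu (close_rec (S k) x A1)
  end.

(* abstract the named variable x:  mu x. A  is  TMu (close x A) *)
Definition close (x : nat) (A : ty) : ty := close_rec 0 x A.

(* capture-avoiding substitution A[U/x] (capture is impossible in the
   locally nameless representation) *)
Fixpoint subst (x : nat) (U : ty) (A : ty) : ty :=
  match A with
  | TFV y => if Nat.eqb y x then U else TFV y
  | TBV i => TBV i
  | TArr A1 A2 => TArr (subst x U A1) (subst x U A2)
  | TLat A1 => TLat (subst x U A1)
  | TMu A1 => TMu (subst x U A1)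
  end.

Fixpoint occurs_free (x : nat) (A : ty) : Prop :=
  match A with
  | TFV y => y = x
  | TBV _ => False
  | TArr A1 A2 => occurs_free x A1 \/ occurs_free x A2
  | TLat A1 => occurs_free x A1
  | TMu A1 => occurs_free x A1
  end.

Definition top : ty := TMu (TLat (TBV 0)).

(* The tail t(A) is the chain of bullets and mu's obtained by following
   the right-hand sides of arrows.  [tail_info A] computes, bottom-up,
   what is needed to decide top-variance:
     TIFree        : the tail ends in a free variable;
     TIPend k b    : the tail ends in a variable bound k binders further
                     out, b = whether a bullet has been passed so far;
     TIRes b       : the tail ends in a variable bound by a mu of the
                     tail; b = whether m_i + ... + m_n >= 1, i.e. a
                     bullet lies between that binder and the variable. *)
Inductive tinfo : Type :=
| TIFree : tinfo
| TIPend : nat -> bool -> tinfo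
| TIRes  : bool -> tinfo.

Fixpoint tail_info (A : ty) : tinfo :=
  match A with
  | TFV _ => TIFree
  | TBV k => TIPend k false
  | TArr _ B => tail_info B
  | TLat A1 =>
      match tail_info A1 with
      | TIPend k _ => TIPend k true
      | t => t
      end
  | TMu A1 =>
      match tail_info A1 with
      | TIPend 0 b => TIRes b
      | TIPend (S k) b => TIPend k b
      | t => t
      end
  end.

Definition top_variant (A : ty) : bool :=
  match tail_info A with
  | TIRes true => true
  | _ => false
  end.

(* bound variables (TBV) are never equal to the free variable x *)
Fixpoint proper (x : nat) (A : ty) : bool :=
  match A with
  | TFV y => negb (Nat.eqb y x)
  | TBV _ => true
  | TArr A1 A2 => (proper x A1 && proper x A2) || top_variant A2
  | TLat _ => true
  | TMu A1 => proper x A1 || top_variant A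
  end.

Inductive wf_ty : ty -> Prop :=
| wf_var : forall x, wf_ty (TFV x)
| wf_arr : forall A B, wf_ty A -> wf_ty B -> wf_ty (TArr A B)
| wf_lat : forall A, wf_ty A -> wf_ty (TLat A)
| wf_mu  : forall x A, wf_ty A -> proper x A = true -> wf_ty (TMu (close x A)).

(* Equality: teq_gen false is  ≅ ,  teq_gen true is  ≃ .              *)
Inductive teq_gen (d : bool) : ty -> ty -> Prop :=
| eq_refl_ : forall A, wf_ty A -> teq_gen d A A
| eq_sym_ : forall A B, teq_gen d A B -> teq_gen d B A
| eq_trans_ : forall A B C, teq_gen d A B -> teq_gen d B C -> teq_gen d A C
| eq_lat : forall A B, teq_gen d A B -> teq_gen d (TLat A) (TLat B)
| eq_arr : forall A B C D, teq_gen d A C -> teq_gen d B D ->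
    teq_gen d (TArr A B) (TArr C D)
| eq_arr_top : forall A, wf_ty A -> teq_gen d (TArr A top) top
| eq_fold : forall A, wf_ty (TMu A) -> teq_gen d (TMu A) (open A (TMu A))
| eq_uniq : forall A C x, wf_ty A -> wf_ty C -> proper x C = true ->
    teq_gen d A (subst x A C) -> teq_gen d A (TMu (close x C))
| eq_distr : forall A B, d = true -> wf_ty A -> wf_ty B ->
    teq_gen d (TLat (TArr A B)) (TArr (TLat A) (TLat B)).

Definition teq := teq_gen false.
Definition tsim := teq_gen true.

(* A subtyping assumption is a finite set of pairs (X,Y) meaning X ≼ Y,
   represented by a list (only membership matters). *)
Definition assum := list (nat * nat).

(* each type variable occurs at most once in the set of pairs *)
Definition assum_wf (g : assum) : Prop :=
  (forall a, In a g -> fst a <> snd a) /\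
  (forall a b, In a g -> In b g ->
     (fst a = fst b \/ fst a = snd b \/ snd a = fst b \/ snd a = snd b) ->
     a = b).

Definition ftv (g : assum) (x : nat) : Prop :=
  exists a, In a g /\ (fst a = x \/ snd a = x).

Definition is_union (g g1 g2 : assum) : Prop :=
  forall a, In a g <-> In a g1 \/ In a g2.

Inductive sub : assum -> ty -> ty -> Prop :=
| sub_ax : forall g X Y, assum_wf g -> In (X, Y) g -> sub g (TFV X) (TFV Y)
| sub_top : forall g A, assum_wf g -> wf_ty A -> sub g A top
| sub_sim : forall g A B, assum_wf g -> tsim A B -> sub g A B
| sub_trans : forall g g1 g2 A B C, sub g1 A B -> sub g2 B C ->
    assum_wf g -> is_union g g1 g2 -> sub g A C
| sub_lat : forall g A B, sub g A B -> sub g (TLat A) (TLat B)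
| sub_arr : forall g g1 g2 A A' B B', sub g1 A' A -> sub g2 B B' ->
    assum_wf g -> is_union g g1 g2 -> sub g (TArr A B) (TArr A' B')
| sub_mu : forall g g' X Y A B, sub g' A B -> assum_wf g' ->
    (forall a, In a g' <-> In a g \/ a = (X, Y)) ->
    ~ ftv g X -> ~ occurs_free X B ->
    ~ ftv g Y -> ~ occurs_free Y A ->
    proper X A = true -> proper Y B = true ->
    sub g (TMu (close X A)) (TMu (close Y B))
| sub_later : forall g A, assum_wf g -> wf_ty A -> sub g A (TLat A).

Inductive lterm : Type :=
| LVar : nat -> lterm
| LApp : lterm -> lterm -> lterm
| LLam : lterm -> lterm.

Fixpoint lren (r : nat -> nat) (M : lterm) : lterm :=
  match M with
  | LVar n => LVar (r n)
  | LApp M1 M2 => LApp (lren r M1) (lren r M2)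
  | LLam M1 => LLam (lren (fun n => match n with 0 => 0 | S m => S (r m) end) M1)
  end.

Definition lup (s : nat -> lterm) : nat -> lterm :=
  fun n => match n with 0 => LVar 0 | S m => lren S (s m) end.

Fixpoint lsubst (s : nat -> lterm) (M : lterm) : lterm :=
  match M with
  | LVar n => s n
  | LApp M1 M2 => LApp (lsubst s M1) (lsubst s M2)
  | LLam M1 => LLam (lsubst (lup s) M1)
  end.

Definition scons {T : Type} (x : T) (f : nat -> T) : nat -> T :=
  fun n => match n with 0 => x | S m => f m end.

Inductive beta_eq : lterm -> lterm -> Prop :=
| be_refl : forall M, beta_eq M M
| be_sym : forall M N, beta_eq M N -> beta_eq N M
| be_trans : forall M N P, beta_eq M N -> beta_eq N P -> beta_eq M P
| be_app : forall M M' N N', beta_eq M M' -> beta_eq N N' ->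
    beta_eq (LApp M N) (LApp M' N')
| be_lam : forall M M', beta_eq M M' -> beta_eq (LLam M) (LLam M')
| be_beta : forall M N, beta_eq (LApp (LLam M) N) (lsubst (scons N LVar) M).

Fixpoint lfree (x : nat) (M : lterm) : Prop :=
  match M with
  | LVar n => n = x
  | LApp M1 M2 => lfree x M1 \/ lfree x M2
  | LLam M1 => lfree (S x) M1
  end.

Definition syn_lambda_algebra (V : Type) (app : V -> V -> V)
  (den : lterm -> (nat -> V) -> V) : Prop :=
  inhabited V /\
  (forall x rho, den (LVar x) rho = rho x) /\
  (forall M N rho, den (LApp M N) rho = app (den M rho) (den N rho)) /\
  (forall M rho v, app (den (LLam M) rho) v = den M (scons v rho)) /\
  (forall M rho rho', (forall x, lfree x M -> rho x = rho' x) ->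
       den M rho = den M rho') /\
  (forall M N rho, beta_eq M N -> den M rho = den N rho).

Definition well_founded_frame (W : Type) (R : W -> W -> Prop) : Prop :=
  inhabited W /\ ~ (exists f : nat -> W, forall n, R (f n) (f (S n))).

Definition locally_linear (W : Type) (R : W -> W -> Prop) : Prop :=
  forall p q, R p q ->
    exists r, clos_refl_trans W R p r /\ R r q /\
      (forall s, R r s -> clos_refl_trans W R q s).

Definition lambdaA_frame (W : Type) (R : W -> W -> Prop) : Prop :=
  well_founded_frame W R /\ locally_linear W R.

Definition hereditary {V W : Type} (R : W -> W -> Prop)
  (eta : nat -> W -> V -> Prop) : Prop :=
  forall X p q, R p q -> forall v, eta X p v -> eta X q v.

(* [is_interp app R eta I] : I satisfies the defining clauses of
   I[A]^eta_p on all type expressions A and worlds p.  These clauses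
   determine I uniquely (by well-founded induction on p and the rank of A,
   as in the paper), so I is the paper's interpretation. *)
Definition is_interp {V W : Type} (app : V -> V -> V) (R : W -> W -> Prop)
  (eta : nat -> W -> V -> Prop) (I : ty -> W -> V -> Prop) : Prop :=
  forall A p, wf_ty A -> forall u,
    I A p u <->
    (if top_variant A then True else
     match A with
     | TFV X => eta X p u
     | TBV _ => False
     | TLat A1 => forall q, R p q -> I A1 q u
     | TArr A1 A2 => forall q, clos_refl_trans W R p q ->
                       forall v, I A1 q v -> I A2 q (app u v)
     | TMu A1 => I (open A1 (TMu A1)) p u
     end).

(* Main.v *)
Require Import Defs.
From Stdlib Require Import List Relations Arith Lia Bool.

Fixpoint properb (j : nat) (A : ty) : bool :=
  match A with
  | TFV _ => true
  | TBV i => negb (Nat.eqb i j)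
  | TArr A1 A2 => (properb j A1 && properb j A2) || top_variant A2
  | TLat _ => true
  | TMu A1 => properb (S j) A1 || top_variant (TMu A1)
  end.

Fixpoint wfk (k : nat) (A : ty) : Prop :=
  match A with
  | TFV _ => True
  | TBV i => i < k
  | TArr A1 A2 => wfk k A1 /\ wfk k A2
  | TLat A1 => wfk k A1
  | TMu A1 => wfk (S k) A1 /\ properb 0 A1 = true
  end.

Fixpoint rank (A : ty) : nat :=
  if top_variant A then 0 else
  match A with
  | TArr A1 A2 => S (max (rank A1) (rank A2))
  | TMu A1 => S (rank A1)
  | _ => 0
  end.

Lemma TV_arr A B : top_variant (TArr A B) = top_variant B.
Proof. reflexivity. Qed.

Lemma TV_lat A : top_variant (TLat A) = top_variant A.
Proof. unfold top_variant; simpl. destruct (tail_info A); auto. Qed.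

Lemma tail_open : forall A k U,
  (forall b, tail_info A = TIRes b -> tail_info (open_rec k U A) = TIRes b) /\
  (forall j b, tail_info A = TIPend j b -> j <> k -> tail_info (open_rec k U A) = TIPend j b) /\
  (forall b, tail_info A = TIPend k b -> tail_info U = TIRes true ->
     tail_info (open_rec k U A) = TIRes true).
Proof.
  induction A; intros k U; simpl.
  - repeat split; intros; discriminate.
  - repeat split; intros.
    + discriminate.
    + inversion H; subst. apply Nat.eqb_neq in H0. rewrite H0. reflexivity.
    + inversion H; subst. rewrite Nat.eqb_refl. auto.
  - apply IHA2.
  - destruct (IHA k U) as [H1 [H2 H3]].
    repeat split; intros.
    + destruct (tail_info A) eqn:E; try discriminate.
      rewrite (H1 _ eq_refl). auto.
    + destruct (tail_info A) eqn:E; try discriminate. inversion H; subst.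
      rewrite (H2 _ _ eq_refl H0). auto.
    + destruct (tail_info A) eqn:E; try discriminate. inversion H; subst.
      rewrite (H3 _ eq_refl H0). auto.
  - destruct (IHA (S k) U) as [H1 [H2 H3]].
    repeat split; intros.
    + destruct (tail_info A) eqn:E; try discriminate.
      * destruct n; [|discriminate]. inversion H; subst.
        rewrite (H2 _ _ eq_refl). auto. lia.
      * inversion H; subst. rewrite (H1 _ eq_refl). auto.
    + destruct (tail_info A) eqn:E; try discriminate.
      destruct n; [discriminate|]. inversion H; subst.
      rewrite (H2 _ _ eq_refl). auto. lia.
    + destruct (tail_info A) eqn:E; try discriminate.
      destruct n; [discriminate|]. inversion H; subst.
      rewrite (H3 _ eq_refl H0). auto.
Qed.

Lemma TV_open A k U : top_variant A = true -> top_variant (open_rec k U A) = true.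
Proof.
  unfold top_variant. destruct (tail_info A) eqn:E; try discriminate.
  destruct b; try discriminate. intros _.
  rewrite (proj1 (tail_open A k U) _ E). auto.
Qed.

Lemma TV_unfold E : top_variant (TMu E) = true -> top_variant (open E (TMu E)) = true.
Proof.
  unfold top_variant, open. intro H.
  destruct (tail_open E 0 (TMu E)) as [H1 [_ H3]].
  simpl in H. destruct (tail_info E) eqn:T; try discriminate.
  - destruct n; try discriminate. destruct b; try discriminate.
    rewrite (H3 true eq_refl). auto. simpl. rewrite T. auto.
  - destruct b; try discriminate. rewrite (H1 _ eq_refl). auto.
Qed.

Lemma tail_subst : forall A x U, tail_info A <> TIFree ->
  tail_info (subst x U A) = tail_info A.
Proof.
  induction A; intros x U H; simpl in *; auto.
  - congruence.
  - destruct (tail_info A) eqn:E; try congruence; rewrite IHA; try congruence; rewrite E; auto.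
  - destruct (tail_info A) eqn:E; try congruence; rewrite IHA; try congruence; rewrite E; auto.
Qed.

Lemma TV_subst A x U : top_variant A = true -> top_variant (subst x U A) = true.
Proof.
  unfold top_variant. intro H. rewrite tail_subst; auto.
  intro E; rewrite E in H; discriminate.
Qed.

Lemma tail_close : forall A k x,
  (forall b, tail_info A = TIRes b -> tail_info (close_rec k x A) = TIRes b) /\
  (forall j b, tail_info A = TIPend j b -> tail_info (close_rec k x A) = TIPend j b).
Proof.
  induction A; intros k x; simpl.
  - split; intros; discriminate.
  - split; intros; auto.
  - apply IHA2.
  - destruct (IHA k x) as [H1 H2]. split; intros.
    + destruct (tail_info A) eqn:E; try discriminate. rewrite (H1 _ eq_refl). auto.
    + destruct (tail_info A) eqn:E; try discriminate. inversion H; subst.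
      rewrite (H2 _ _ eq_refl). auto.
  - destruct (IHA (S k) x) as [H1 H2]. split; intros.
    + destruct (tail_info A) eqn:E; try discriminate.
      * rewrite (H2 _ _ eq_refl). auto.
      * rewrite (H1 _ eq_refl). auto.
    + destruct (tail_info A) eqn:E; try discriminate.
      rewrite (H2 _ _ eq_refl). auto.
Qed.

Lemma TV_close A k x : top_variant A = true -> top_variant (close_rec k x A) = true.
Proof.
  unfold top_variant. destruct (tail_info A) eqn:E; try discriminate.
  destruct b; try discriminate. intros _.
  rewrite (proj1 (tail_close A k x) _ E). auto.
Qed.

Lemma wfk_mono : forall A k m, wfk k A -> k <= m -> wfk m A.
Proof.
  induction A; intros k m H Hle; simpl in *; intuition eauto; try lia.
  eapply IHA; eauto; lia.
Qed.

Lemma wfk_properb : forall A k j, wfk k A -> k <= j -> properb j A = true.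
Proof.
  induction A; intros k j H Hle; simpl in *; auto.
  - apply negb_true_iff, Nat.eqb_neq. lia.
  - destruct H. rewrite (IHA1 k j), (IHA2 k j); auto.
  - destruct H. rewrite (IHA (S k) (S j)); auto. lia.
Qed.

Lemma properb_open : forall A j k U, properb j A = true -> wfk 0 U -> j <> k ->
  properb j (open_rec k U A) = true.
Proof.
  induction A; intros j k U H HU Hjk; simpl in *; auto.
  - destruct (Nat.eqb n k); auto. eapply wfk_properb; eauto; lia.
  - apply orb_true_iff in H. destruct H as [H|H].
    + apply andb_true_iff in H. destruct H. rewrite IHA1, IHA2; auto.
    + rewrite (TV_open _ k U H). apply orb_true_r.
  - apply orb_true_iff in H. destruct H as [H|H].
    + rewrite IHA; auto. 
    + apply orb_true_iff; right. apply (TV_open (TMu A) k U H).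
Qed.

Lemma wfk_open : forall A k U, wfk (S k) A -> wfk 0 U -> wfk k (open_rec k U A).
Proof.
  induction A; intros k U H HU; simpl in *; auto.
  - destruct (Nat.eqb n k) eqn:E. eapply wfk_mono; eauto; lia.
    simpl. apply Nat.eqb_neq in E. lia.
  - intuition.
  - destruct H; split; auto. apply properb_open; auto.
Qed.

Lemma rank_open : forall A k U, properb k A = true -> rank (open_rec k U A) <= rank A.
Proof.
  induction A; intros k U H.
  - simpl; lia.
  - simpl in *. destruct (Nat.eqb n k) eqn:E; simpl in *; [discriminate|lia].
  - simpl open_rec. simpl rank. rewrite !TV_arr.
    destruct (top_variant (open_rec k U A2)) eqn:E1; [lia|].
    simpl in H. apply orb_true_iff in H. destruct H as [H|H].
    + apply andb_true_iff in H. destruct H.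
      destruct (top_variant A2) eqn:E2. rewrite (TV_open _ k U E2) in E1; discriminate.
      specialize (IHA1 k U H). specialize (IHA2 k U H0). lia.
    + rewrite (TV_open _ k U H) in E1; discriminate.
  - simpl. destruct (top_variant _); lia.
  - simpl open_rec. cbn [rank].
    destruct (top_variant (TMu (open_rec (S k) U A))) eqn:E1; [lia|].
    simpl in H. apply orb_true_iff in H. destruct H as [H|H].
    + destruct (top_variant (TMu A)) eqn:E2.
      * pose proof (TV_open _ k U E2). simpl in H0. rewrite H0 in E1; discriminate.
      * specialize (IHA (S k) U H). lia.
    + pose proof (TV_open _ k U H). simpl in H0. rewrite H0 in E1; discriminate.
Qed.
Lemma open_lc : forall U j k W, wfk j U -> j <= k -> open_rec k W U = U.
Proof.
  induction U; intros j k W H Hle; simpl in *; auto.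
  - destruct (Nat.eqb n k) eqn:E; auto. apply Nat.eqb_eq in E; lia.
  - destruct H; f_equal; eauto.
  - f_equal; eauto.
  - destruct H; f_equal; eapply IHU; eauto; lia.
Qed.

Lemma properb_subst : forall A j x U, properb j A = true -> wfk 0 U ->
  properb j (subst x U A) = true.
Proof.
  induction A; intros j x U H HU; simpl in *; auto.
  - destruct (Nat.eqb n x); auto. eapply wfk_properb; eauto; lia.
  - apply orb_true_iff in H. destruct H as [H|H].
    + apply andb_true_iff in H. destruct H. rewrite IHA1, IHA2; auto.
    + rewrite (TV_subst _ x U H). apply orb_true_r.
  - apply orb_true_iff in H. destruct H as [H|H].
    + rewrite IHA; auto.
    + apply orb_true_iff; right. apply (TV_subst (TMu A) x U H).
Qed.

Lemma wfk_subst : forall A k x U, wfk k A -> wfk 0 U -> wfk k (subst x U A).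
Proof.
  induction A; intros k x U H HU; simpl in *; auto.
  - destruct (Nat.eqb n x); simpl; auto. eapply wfk_mono; eauto; lia.
  - intuition.
  - destruct H; split; auto. apply properb_subst; auto.
Qed.

Lemma subst_open : forall A k x U V, wfk 0 U ->
  subst x U (open_rec k V A) = open_rec k (subst x U V) (subst x U A).
Proof.
  induction A; intros k x U V HU; simpl; auto.
  - destruct (Nat.eqb n x); auto. rewrite (open_lc U 0); auto; lia.
  - destruct (Nat.eqb n k); auto.
  - f_equal; auto.
  - f_equal; auto.
  - f_equal; auto.
Qed.

Lemma open_close : forall A k x U, wfk k A ->
  open_rec k U (close_rec k x A) = subst x U A.
Proof.
  induction A; intros k x U H; simpl in *; auto.
  - destruct (Nat.eqb n x); simpl; auto. rewrite Nat.eqb_refl; auto.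
  - destruct (Nat.eqb n k) eqn:E; auto. apply Nat.eqb_eq in E; lia.
  - destruct H; f_equal; auto.
  - f_equal; auto.
  - destruct H; f_equal; auto.
Qed.

Lemma properb_close : forall A j k x, properb j A = true -> j <> k ->
  properb j (close_rec k x A) = true.
Proof.
  induction A; intros j k x H Hjk; simpl in *; auto.
  - destruct (Nat.eqb n x); simpl; auto. apply negb_true_iff, Nat.eqb_neq; lia.
  - apply orb_true_iff in H. destruct H as [H|H].
    + apply andb_true_iff in H. destruct H. rewrite IHA1, IHA2; auto.
    + rewrite (TV_close _ k x H). apply orb_true_r.
  - apply orb_true_iff in H. destruct H as [H|H].
    + rewrite IHA; auto.
    + apply orb_true_iff; right. apply (TV_close (TMu A) k x H).
Qed.

Lemma close_wfk : forall A k x, wfk k A -> wfk (S k) (close_rec k x A).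
Proof.
  induction A; intros k x H; simpl in *; auto.
  - destruct (Nat.eqb n x); simpl; auto.
  - intuition.
  - destruct H; split; auto. apply properb_close; auto.
Qed.

Lemma proper_close : forall A k x, wfk k A -> proper x A = true ->
  properb k (close_rec k x A) = true.
Proof.
  induction A; intros k x H Hp; simpl in *; auto.
  - destruct (Nat.eqb n x); simpl in *; auto. discriminate.
  - apply negb_true_iff, Nat.eqb_neq; lia.
  - destruct H. apply orb_true_iff in Hp. destruct Hp as [Hp|Hp].
    + apply andb_true_iff in Hp. destruct Hp. rewrite IHA1, IHA2; auto.
    + rewrite (TV_close _ k x Hp). apply orb_true_r.
  - destruct H. apply orb_true_iff in Hp. destruct Hp as [Hp|Hp].
    + rewrite IHA; auto.
    + apply orb_true_iff; right. apply (TV_close (TMu A) k x Hp).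
Qed.

Lemma proper_open : forall A k x, properb k A = true -> ~ occurs_free x A ->
  proper x (open_rec k (TFV x) A) = true.
Proof.
  induction A; intros k x H Hx; simpl in *; auto.
  - apply negb_true_iff, Nat.eqb_neq; auto.
  - destruct (Nat.eqb n k) eqn:E; simpl in *; auto. discriminate.
  - apply orb_true_iff in H. destruct H as [H|H].
    + apply andb_true_iff in H. destruct H. rewrite IHA1, IHA2; auto.
    + rewrite (TV_open _ k (TFV x) H). apply orb_true_r.
  - apply orb_true_iff in H. destruct H as [H|H].
    + rewrite IHA; auto.
    + apply orb_true_iff; right. apply (TV_open (TMu A) k (TFV x) H).
Qed.

Lemma close_open : forall A k x, ~ occurs_free x A ->
  close_rec k x (open_rec k (TFV x) A) = A.
Proof.
  induction A; intros k x Hx; simpl in *; auto.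
  - destruct (Nat.eqb n x) eqn:E; auto. apply Nat.eqb_eq in E; congruence.
  - destruct (Nat.eqb n k) eqn:E; simpl; auto. rewrite Nat.eqb_refl.
    apply Nat.eqb_eq in E; congruence.
  - f_equal; auto.
  - f_equal; auto.
  - f_equal; auto.
Qed.

Fixpoint tsize (A : ty) : nat :=
  match A with
  | TFV _ | TBV _ => 1
  | TArr A1 A2 => S (tsize A1 + tsize A2)
  | TLat A1 | TMu A1 => S (tsize A1)
  end.

Fixpoint maxfv (A : ty) : nat :=
  match A with
  | TFV x => x
  | TBV _ => 0
  | TArr A1 A2 => max (maxfv A1) (maxfv A2)
  | TLat A1 | TMu A1 => maxfv A1
  end.

Lemma maxfv_spec : forall A x, occurs_free x A -> x <= maxfv A.
Proof. induction A; intros x H; simpl in *; try lia; try tauto.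
  destruct H as [H|H]; [specialize (IHA1 _ H)|specialize (IHA2 _ H)]; lia.
  apply IHA; auto. apply IHA; auto. Qed.

Lemma tsize_open : forall A k x, tsize (open_rec k (TFV x) A) = tsize A.
Proof. induction A; intros; simpl; auto. destruct (Nat.eqb n k); auto. Qed.

Lemma wf_wfk : forall A, wf_ty A -> wfk 0 A.
Proof.
  induction 1; simpl; auto.
  split. apply close_wfk; auto. apply proper_close; auto.
Qed.

Lemma wfk_wf_aux : forall n A, tsize A <= n -> wfk 0 A -> wf_ty A.
Proof.
  induction n; intros A Hs H. destruct A; simpl in Hs; lia.
  destruct A; simpl in *.
  - constructor.
  - lia.
  - destruct H. constructor; apply IHn; auto; lia.
  - constructor; apply IHn; auto; lia.
  - destruct H as [H1 H2].
    set (x := S (maxfv A)).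
    assert (Hx : ~ occurs_free x A). { intro O. apply maxfv_spec in O. unfold x in O; lia. }
    rewrite <- (close_open A 0 x Hx).
    constructor.
    + apply IHn. rewrite tsize_open; lia. apply wfk_open; simpl; auto.
    + apply proper_open; auto.
Qed.

Lemma wfk_wf A : wfk 0 A -> wf_ty A.
Proof. intro; eapply wfk_wf_aux; eauto. Qed.

Lemma occurs_open : forall A k U Z, occurs_free Z (open_rec k U A) ->
  occurs_free Z A \/ occurs_free Z U.
Proof.
  induction A; intros k U Z H; simpl in *; auto.
  - destruct (Nat.eqb n k); simpl in *; auto.
  - destruct H as [H|H]; [destruct (IHA1 _ _ _ H)|destruct (IHA2 _ _ _ H)]; auto.
  - eapply IHA; eauto.
  - eapply IHA; eauto.
Qed.

Lemma wfk_unfold A : wfk 0 (TMu A) -> wfk 0 (open A (TMu A)).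
Proof. intro H. unfold open. apply wfk_open; auto. destruct H; auto. Qed.

Lemma rank_unfold A : wfk 0 (TMu A) -> top_variant (TMu A) = false ->
  rank (open A (TMu A)) < rank (TMu A).
Proof.
  intros [H1 H2] H. unfold open. pose proof (rank_open A 0 (TMu A) H2).
  cbn [rank]. rewrite H. lia.
Qed.

Lemma rank_arr A B : top_variant (TArr A B) = false ->
  rank A < rank (TArr A B) /\ rank B < rank (TArr A B).
Proof. intro H. cbn [rank]. rewrite H. lia. Qed.

Lemma proper_open_gen : forall A k X U, proper X A = true -> proper X U = true ->
  proper X (open_rec k U A) = true.
Proof.
  induction A; intros k X U H HU; simpl in *; auto.
  - destruct (Nat.eqb n k); auto.
  - apply orb_true_iff in H. destruct H as [H|H].
    + apply andb_true_iff in H. destruct H. rewrite IHA1, IHA2; auto.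
    + rewrite (TV_open _ k U H). apply orb_true_r.
  - apply orb_true_iff in H. destruct H as [H|H].
    + rewrite IHA; auto.
    + apply orb_true_iff; right. apply (TV_open (TMu A) k U H).
Qed.
From Stdlib Require Import Classical.

Section Sem.
Variables (V : Type) (app : V -> V -> V) (W : Type) (R : W -> W -> Prop).
Hypothesis Hwf : well_founded (fun q p => clos_trans W R p q).

Lemma wr_ind (P : W -> ty -> Prop) :
  (forall p A, (forall q B, clos_trans W R p q -> P q B) ->
     (forall B, rank B < rank A -> P p B) -> P p A) -> forall p A, P p A.
Proof.
  intros H p. induction p as [p IHp] using (well_founded_induction Hwf).
  intro A. remember (rank A) as n. revert A Heqn.
  induction n as [n IHn] using lt_wf_ind. intros A Hn.
  apply H. intros; apply IHp; auto.
  intros B HB. apply (IHn (rank B)); auto; lia.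
Qed.

Lemma rt_split p q : clos_refl_trans W R p q -> p = q \/ clos_trans W R p q.
Proof.
  induction 1; auto.
  - right; constructor; auto.
  - destruct IHclos_refl_trans1 as [->|H1]; destruct IHclos_refl_trans2 as [->|H2]; auto.
    right; econstructor 2; eauto.
Qed.

Lemma ct_irrefl p : ~ clos_trans W R p p.
Proof.
  induction p as [p IH] using (well_founded_induction Hwf).
  intro H. apply (IH p H H).
Qed.

Lemma ct_rt p q : clos_trans W R p q -> clos_refl_trans W R p q.
Proof. induction 1. constructor; auto. econstructor 3; eauto. Qed.

Lemma ct_rt_trans p q s : clos_trans W R p q -> clos_refl_trans W R q s -> clos_trans W R p s.
Proof. intros H1 H2. destruct (rt_split _ _ H2) as [<-|H]; auto. econstructor 2; eauto. Qed.

Section Unfold.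
Variable eta : nat -> W -> V -> Prop.
Variable I : ty -> W -> V -> Prop.
Hypothesis HI : is_interp app R eta I.

Lemma u_tv A p u : wfk 0 A -> top_variant A = true -> I A p u.
Proof. intros H T. apply (HI A p (wfk_wf _ H)). rewrite T; auto. Qed.

Lemma u_var X p u : I (TFV X) p u <-> eta X p u.
Proof. apply (HI (TFV X) p (wf_var X)). Qed.

Lemma u_lat A p u : wfk 0 A -> (I (TLat A) p u <-> forall q, R p q -> I A q u).
Proof.
  intro H. rewrite (HI (TLat A) p (wfk_wf (TLat A) H)).
  destruct (top_variant (TLat A)) eqn:T; [|reflexivity].
  rewrite TV_lat in T. split; auto. intros; apply u_tv; auto.
Qed.

Lemma u_arr A B p u : wfk 0 A -> wfk 0 B -> (I (TArr A B) p u <->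
  forall q, clos_refl_trans W R p q -> forall v, I A q v -> I B q (app u v)).
Proof.
  intros H1 H2. rewrite (HI (TArr A B) p (wfk_wf (TArr A B) (conj H1 H2))).
  destruct (top_variant (TArr A B)) eqn:T; [|reflexivity].
  rewrite TV_arr in T. split; auto. intros; apply u_tv; auto.
Qed.

Lemma u_mu A p u : wfk 0 (TMu A) -> (I (TMu A) p u <-> I (open A (TMu A)) p u).
Proof.
  intro H. rewrite (HI (TMu A) p (wfk_wf (TMu A) H)).
  destruct (top_variant (TMu A)) eqn:T; [|reflexivity].
  split; auto. intros; apply u_tv; auto. apply wfk_unfold; auto. apply TV_unfold; auto.
Qed.

Lemma heredity : hereditary R eta ->
  forall p A, wfk 0 A -> forall q, R p q -> forall u, I A p u -> I A q u.
Proof.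
  intro Heta. apply (wr_ind (fun p A => wfk 0 A -> forall q, R p q -> forall u, I A p u -> I A q u)).
  intros p A IHw IHr HA q Hpq u Hu.
  destruct (top_variant A) eqn:T. apply u_tv; auto.
  destruct A; simpl in HA.
  - apply u_var. apply u_var in Hu. eapply Heta; eauto.
  - lia.
  - destruct HA. rewrite u_arr in Hu |- *; auto. intros s Hs v Hv.
    apply Hu; auto. econstructor 3; [constructor; eauto|auto].
  - rewrite u_lat in Hu |- *; auto. intros s Hs.
    apply (IHw q A (t_step _ _ _ _ Hpq) HA s Hs). auto.
  - rewrite u_mu in Hu |- *; auto.
    apply (IHr (open A (TMu A))); auto. apply rank_unfold; auto. apply wfk_unfold; auto.
Qed.

End Unfold.

Section Agree.
Variables (eta1 eta2 : nat -> W -> V -> Prop) (I1 I2 : ty -> W -> V -> Prop).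
Hypothesis H1 : is_interp app R eta1 I1.
Hypothesis H2 : is_interp app R eta2 I2.

Lemma agree : forall p A, wfk 0 A ->
  (forall Z, occurs_free Z A -> forall q, clos_refl_trans W R p q ->
     forall u, eta1 Z q u <-> eta2 Z q u) ->
  forall u, I1 A p u <-> I2 A p u.
Proof.
  apply (wr_ind (fun p A => wfk 0 A ->
  (forall Z, occurs_free Z A -> forall q, clos_refl_trans W R p q ->
     forall u, eta1 Z q u <-> eta2 Z q u) ->
  forall u, I1 A p u <-> I2 A p u)).
  intros p A IHw IHr HA Hag u.
  destruct (top_variant A) eqn:T. split; intros; eapply u_tv; eauto.
  destruct A; simpl in HA.
  - rewrite (u_var _ _ H1), (u_var _ _ H2). apply Hag; simpl; auto. constructor 2.
  - lia.
  - destruct HA as [HA1 HA2].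
    assert (K : forall B, wfk 0 B -> rank B < rank (TArr A1 A2) ->
      (forall Z, occurs_free Z B -> occurs_free Z (TArr A1 A2)) ->
      forall q, clos_refl_trans W R p q -> forall w, I1 B q w <-> I2 B q w).
    { intros B HB Hr Hs q Hq w. destruct (rt_split _ _ Hq) as [<-|Hq'].
      - apply IHr; auto.
      - apply IHw; auto. intros Z HZ s Hs'. apply Hag; auto. apply ct_rt. eapply ct_rt_trans; eauto. }
    destruct (rank_arr A1 A2 T) as [Hr1 Hr2].
    rewrite (u_arr _ _ H1), (u_arr _ _ H2); auto.
    split; intros H q Hq v Hv.
    + apply (K A2); simpl; auto. apply H; auto. apply (K A1); simpl; auto.
    + apply (K A2); simpl; auto. apply H; auto. apply (K A1); simpl; auto.
  - rewrite (u_lat _ _ H1), (u_lat _ _ H2); auto.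
    assert (K : forall q, R p q -> forall w, I1 A q w <-> I2 A q w).
    { intros q Hq w. apply IHw; auto. constructor; auto. intros Z HZ s Hs. apply Hag; auto.
      econstructor 3; [constructor; eauto|auto]. }
    split; intros H q Hq; apply K; auto.
  - rewrite (u_mu _ _ H1), (u_mu _ _ H2); auto.
    apply IHr. apply rank_unfold; auto. apply wfk_unfold; auto.
    intros Z HZ. apply occurs_open in HZ. destruct HZ; apply Hag; auto.
Qed.

Lemma contractive : forall X p A, wfk 0 A -> proper X A = true ->
  (forall Z, occurs_free Z A -> Z <> X -> forall q, clos_refl_trans W R p q ->
     forall u, eta1 Z q u <-> eta2 Z q u) ->
  (forall q, clos_trans W R p q -> forall u, eta1 X q u <-> eta2 X q u) ->
  forall u, I1 A p u <-> I2 A p u.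
Proof.
  intro X.
  apply (wr_ind (fun p A => wfk 0 A -> proper X A = true ->
  (forall Z, occurs_free Z A -> Z <> X -> forall q, clos_refl_trans W R p q ->
     forall u, eta1 Z q u <-> eta2 Z q u) ->
  (forall q, clos_trans W R p q -> forall u, eta1 X q u <-> eta2 X q u) ->
  forall u, I1 A p u <-> I2 A p u)).
  intros p A IHw IHr HA Hp Hag HX u.
  destruct (top_variant A) eqn:T. split; intros; eapply u_tv; eauto.
  assert (Gen : forall B q, wfk 0 B -> (forall Z, occurs_free Z B -> occurs_free Z A) ->
     clos_trans W R p q -> forall w, I1 B q w <-> I2 B q w).
  { intros B q HB HBs Hq w. apply agree; auto. intros Z HZ s Hs.
    destruct (Nat.eq_dec Z X) as [->|Hne].
    - apply HX. eapply ct_rt_trans; eauto.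
    - apply Hag; auto. apply ct_rt; eapply ct_rt_trans; eauto. }
  destruct A; simpl in HA.
  - rewrite (u_var _ _ H1), (u_var _ _ H2). simpl in Hp.
    apply negb_true_iff, Nat.eqb_neq in Hp. apply Hag; simpl; auto. constructor 2.
  - lia.
  - destruct HA as [HA1 HA2]. simpl in Hp. rewrite TV_arr in T. rewrite T in Hp.
    rewrite orb_false_r in Hp. apply andb_true_iff in Hp. destruct Hp as [Hp1 Hp2].
    rewrite <- TV_arr with (A := A1) in T.
    destruct (rank_arr A1 A2 T) as [Hr1 Hr2].
    assert (K : forall B, wfk 0 B -> proper X B = true -> rank B < rank (TArr A1 A2) ->
      (forall Z, occurs_free Z B -> occurs_free Z (TArr A1 A2)) ->
      forall q, clos_refl_trans W R p q -> forall w, I1 B q w <-> I2 B q w).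
    { intros B HB HpB Hr Hs q Hq w. destruct (rt_split _ _ Hq) as [<-|Hq'].
      - apply IHr; auto.
      - apply Gen; auto. }
    rewrite (u_arr _ _ H1), (u_arr _ _ H2); auto.
    split; intros H q Hq v Hv.
    + apply (K A2); simpl; auto. apply H; auto. apply (K A1); simpl; auto.
    + apply (K A2); simpl; auto. apply H; auto. apply (K A1); simpl; auto.
  - rewrite (u_lat _ _ H1), (u_lat _ _ H2); auto.
    split; intros H q Hq; apply Gen; auto; constructor; auto.
  - simpl in Hp. rewrite T in Hp. rewrite orb_false_r in Hp.
    rewrite (u_mu _ _ H1), (u_mu _ _ H2); auto.
    apply IHr. apply rank_unfold; auto. apply wfk_unfold; auto.
    apply proper_open_gen; auto. simpl. rewrite Hp. auto.
    intros Z HZ. apply occurs_open in HZ. destruct HZ; apply Hag; auto.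
    auto.
Qed.

End Agree.
End Sem.
From Stdlib Require Import Setoid FunctionalExtensionality ClassicalEpsilon.
From Stdlib Require Import Wellfounded.Transitive_Closure Wellfounded.Inclusion.

Definition upd {W V : Type} (eta : nat -> W -> V -> Prop) (X : nat) (S : W -> V -> Prop) :
  nat -> W -> V -> Prop := fun Z => if Nat.eqb Z X then S else eta Z.

Section Sem2.
Variables (V : Type) (app : V -> V -> V) (W : Type) (R : W -> W -> Prop).
Hypothesis Hwf : well_founded (fun q p => clos_trans W R p q).

Lemma subst_interp eta I X D : is_interp app R eta I -> wfk 0 D ->
  is_interp app R (upd eta X (I D)) (fun C => I (subst X D C)).
Proof.
  intros HI HD A p HA u. apply wf_wfk in HA. cbv beta.
  destruct A as [y|i|A1 A2|A1|A1]; simpl in HA.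
  - simpl subst. unfold upd. destruct (Nat.eqb y X); [reflexivity|].
    apply (u_var _ _ _ _ _ _ HI).
  - lia.
  - destruct HA as [HA1 HA2]. simpl subst.
    rewrite (u_arr _ _ _ _ _ _ HI); try apply wfk_subst; auto.
    destruct (top_variant (TArr A1 A2)) eqn:T; [|reflexivity].
    split; auto. intros _ q _ w _. apply (u_tv _ _ _ _ _ _ HI). apply wfk_subst; auto.
    apply TV_subst. auto.
  - simpl subst.
    rewrite (u_lat _ _ _ _ _ _ HI); try apply wfk_subst; auto.
    destruct (top_variant (TLat A1)) eqn:T; [|reflexivity].
    rewrite TV_lat in T.
    split; auto. intros _ q _. apply (u_tv _ _ _ _ _ _ HI). apply wfk_subst; auto.
    apply TV_subst. auto.
  - assert (HM : wfk 0 (TMu (subst X D A1))) by (apply (wfk_subst (TMu A1)); auto).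
    simpl subst. rewrite (u_mu _ _ _ _ _ _ HI); auto.
    destruct (top_variant (TMu A1)) eqn:T.
    + split; auto. intros _. apply (u_tv _ _ _ _ _ _ HI). apply wfk_unfold; auto.
      apply TV_unfold. apply (TV_subst (TMu A1)). auto.
    + unfold open. rewrite subst_open; auto. reflexivity.
Qed.

Section Exist.
Variable eta : nat -> W -> V -> Prop.

Section Step.
Variable p : W.
Variable lower : forall q, clos_trans W R p q -> ty -> V -> Prop.

Fixpoint Fp (n : nat) (A : ty) {struct n} : V -> Prop :=
  match n with
  | 0 => fun _ => False
  | S n' => fun u =>
    if top_variant A then True else
    match A with
    | TFV X => eta X p u
    | TBV _ => False
    | TLat A1 => forall q, R p q -> forall h : clos_trans W R p q, lower q h A1 u
    | TArr A1 A2 => forall q, clos_refl_trans W R p q -> forall v,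
        ((q = p -> Fp n' A1 v) /\ (forall h, lower q h A1 v)) ->
        ((q = p -> Fp n' A2 (app u v)) /\ (forall h, lower q h A2 (app u v)))
    | TMu A1 => Fp n' (open A1 (TMu A1)) u
    end
  end.

Lemma Fp_fuel : forall n m A, wfk 0 A -> rank A < n -> rank A < m ->
  forall u, Fp n A u <-> Fp m A u.
Proof.
  induction n; intros m A HA Hn Hm u; [lia|]. destruct m; [lia|].
  simpl. destruct (top_variant A) eqn:T; [tauto|].
  destruct A; simpl in HA; try reflexivity.
  - destruct HA as [HA1 HA2]. destruct (rank_arr A1 A2 T) as [R1 R2].
    assert (E1 : forall v, Fp n A1 v <-> Fp m A1 v) by (intro; apply IHn; auto; lia).
    assert (E2 : forall v, Fp n A2 v <-> Fp m A2 v) by (intro; apply IHn; auto; lia).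
    setoid_rewrite E1. setoid_rewrite E2. reflexivity.
  - pose proof (rank_unfold A HA T). apply IHn; auto. apply wfk_unfold; auto. lia. lia.
Qed.
End Step.

Definition Gf (p : W) (lower : forall q, clos_trans W R p q -> ty -> V -> Prop) : ty -> V -> Prop :=
  fun A => Fp p lower (S (rank A)) A.

Definition FixI : W -> ty -> V -> Prop := Fix Hwf (fun _ => ty -> V -> Prop) Gf.

Lemma FixI_eq p : FixI p = Gf p (fun q _ => FixI q).
Proof.
  unfold FixI. apply (Fix_eq Hwf (fun _ => ty -> V -> Prop) Gf). intros x f g Hfg.
  assert (f = g) as ->; auto.
  apply functional_extensionality_dep; intro y. apply functional_extensionality_dep; intro h.
  auto.
Qed.

Definition Interp (A : ty) (p : W) : V -> Prop := FixI p A.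

Lemma Interp_Fp A p u : Interp A p u <-> Fp p (fun q _ => FixI q) (S (rank A)) A u.
Proof. unfold Interp. rewrite FixI_eq. reflexivity. Qed.

Lemma Interp_ok : is_interp app R eta Interp.
Proof.
  intros A p HA u. apply wf_wfk in HA. rewrite Interp_Fp. simpl.
  destruct (top_variant A) eqn:T; [reflexivity|].
  destruct A; simpl in HA; try reflexivity.
  - destruct HA as [HA1 HA2]. destruct (rank_arr A1 A2 T) as [R1 R2].
    assert (K : forall B q w, wfk 0 B -> rank B < rank (TArr A1 A2) ->
       clos_refl_trans W R p q ->
       ((q = p -> Fp p (fun q _ => FixI q) (rank (TArr A1 A2)) B w) /\
        (forall h : clos_trans W R p q, FixI q B w)) <-> Interp B q w).
    { intros B q w HB Hr Hq. destruct (rt_split _ _ _ _ Hq) as [<-|Hq'].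
      - split.
        + intros [Ha _]. rewrite Interp_Fp. rewrite <- Fp_fuel; eauto; lia.
        + intro Hi. split.
          * intros _. rewrite Interp_Fp in Hi. rewrite Fp_fuel; eauto; lia.
          * intro h. exfalso. eapply ct_irrefl; eauto.
      - split.
        + intros [_ Hb]. apply Hb. auto.
        + intro Hi. split; auto. intro E; subst. exfalso. eapply ct_irrefl; eauto. }
    split.
    + intros H q Hq v Hv. apply (proj1 (K A2 q _ HA2 R2 Hq)). apply H; auto.
      apply (proj2 (K A1 q _ HA1 R1 Hq)). auto.
    + intros H q Hq v Hv. apply (proj2 (K A2 q _ HA2 R2 Hq)). apply H; auto.
      apply (proj1 (K A1 q _ HA1 R1 Hq)). auto.
  - split.
    + intros H q Hq. apply (H q Hq (t_step _ _ _ _ Hq)).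
    + intros H q Hq h. apply H; auto.
  - pose proof (rank_unfold A HA T). rewrite Interp_Fp.
    apply Fp_fuel; auto; try apply wfk_unfold; auto; lia.
Qed.

End Exist.

Lemma interp_exists eta : exists I, is_interp app R eta I.
Proof. exists (Interp eta). apply Interp_ok. Qed.

End Sem2.

Lemma frame_wf1 (W : Type) (R : W -> W -> Prop) :
  ~ (exists f : nat -> W, forall n, R (f n) (f (S n))) -> well_founded (fun q p => R p q).
Proof.
  intros H p. apply NNPP; intro Hn.
  set (P := fun x => ~ Acc (fun q p => R p q) x).
  assert (step : forall x, P x -> exists y, R x y /\ P y).
  { intros x Hx. apply NNPP; intro Hno. apply Hx. constructor. intros y Hy.
    apply NNPP; intro Hy'. apply Hno. exists y; auto. }
  assert (Hc : forall s : {x | P x}, {t : {x | P x} | R (proj1_sig s) (proj1_sig t)}).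
  { intro s. destruct (constructive_indefinite_description _ (step _ (proj2_sig s))) as [y [Hy1 Hy2]].
    exists (exist _ y Hy2). exact Hy1. }
  apply H. exists (fun n => proj1_sig (Nat.iter n (fun s => proj1_sig (Hc s)) (exist P p Hn))).
  intro n. simpl. apply (proj2_sig (Hc _)).
Qed.

Lemma frame_wf (W : Type) (R : W -> W -> Prop) :
  well_founded_frame W R -> well_founded (fun q p => clos_trans W R p q).
Proof.
  intros [_ H]. apply frame_wf1 in H.
  apply wf_clos_trans in H.
  eapply wf_incl; [|exact H].
  intros q p Hpq. induction Hpq.
  - constructor; auto.
  - econstructor 2; eauto.
Qed.
Lemma wfk_top : wfk 0 top.
Proof. simpl. split; auto. Qed.

Lemma teq_wf d A B : teq_gen d A B -> wfk 0 A /\ wfk 0 B.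
Proof.
  induction 1; simpl.
  - split; apply wf_wfk; auto.
  - tauto.
  - tauto.
  - tauto.
  - tauto.
  - pose proof (wf_wfk _ H). auto using wfk_top.
  - pose proof (wf_wfk _ H). split; auto. apply wfk_unfold; auto.
  - split. tauto. apply (wf_wfk (TMu (close x C))). constructor; auto.
  - pose proof (wf_wfk _ H0). pose proof (wf_wfk _ H1). auto.
Qed.

Lemma sub_wf g A B : sub g A B -> wfk 0 A /\ wfk 0 B.
Proof.
  induction 1; simpl; intuition (auto using wf_wfk, wfk_top).
  all: first [exact (proj1 (teq_wf _ _ _ H0)) | exact (proj2 (teq_wf _ _ _ H0)) |
    apply close_wfk; auto | apply proper_close; auto].
Qed.

Lemma ct_first (W : Type) (R : W -> W -> Prop) p s : clos_trans W R p s ->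
  exists q, R p q /\ clos_refl_trans W R q s.
Proof.
  induction 1. exists y; split; auto. constructor 2.
  destruct IHclos_trans1 as [q [H1 H2]]. exists q; split; auto.
  econstructor 3; eauto. apply ct_rt; auto.
Qed.

Lemma ct_last (W : Type) (R : W -> W -> Prop) p s : clos_trans W R p s ->
  exists x, clos_refl_trans W R p x /\ R x s.
Proof.
  induction 1. exists x; split; auto. constructor 2.
  destruct IHclos_trans2 as [q [H1 H2]]. exists q; split; auto.
  econstructor 3; eauto. apply ct_rt; auto.
Qed.

Section Main.
Variables (V : Type) (app : V -> V -> V) (W : Type) (R : W -> W -> Prop).
Hypothesis Hwf : well_founded (fun q p => clos_trans W R p q).
Hypothesis LL : locally_linear W R.

Lemma hered_rt eta I : hereditary R eta -> is_interp app R eta I ->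
  forall A, wfk 0 A -> forall p q, clos_refl_trans W R p q -> forall u, I A p u -> I A q u.
Proof.
  intros He HI A HA p q H. induction H; auto.
  intro u. eapply heredity; eauto.
Qed.

Lemma teq_sound eta I (He : hereditary R eta) (HI : is_interp app R eta I) d A B :
  teq_gen d A B -> forall p u, I A p u <-> I B p u.
Proof.
  induction 1; intros p u.
  - reflexivity.
  - symmetry; auto.
  - rewrite IHteq_gen1; auto.
  - destruct (teq_wf _ _ _ H). rewrite !(u_lat _ _ _ _ _ _ HI); auto.
    split; intros K q Hq; apply IHteq_gen; auto.
  - destruct (teq_wf _ _ _ H). destruct (teq_wf _ _ _ H0).
    rewrite !(u_arr _ _ _ _ _ _ HI); auto.
    split; intros K q Hq v Hv; apply IHteq_gen2; apply K; auto; apply IHteq_gen1; auto.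
  - apply wf_wfk in H. split; intros _; apply (u_tv _ _ _ _ _ _ HI); simpl; auto using wfk_top.
  - apply wf_wfk in H. apply (u_mu _ _ _ _ _ _ HI); auto.
  - apply wf_wfk in H, H0.
    assert (HM : wfk 0 (TMu (close x C))) by (apply wf_wfk; constructor; auto; apply wfk_wf; auto).
    revert u. induction p as [p IHp] using (well_founded_induction Hwf). intro u.
    rewrite IHteq_gen.
    rewrite (u_mu _ _ _ _ _ _ HI); auto. unfold open. rewrite open_close; auto.
    pose proof (subst_interp _ _ _ _ _ _ x A HI H) as SA.
    pose proof (subst_interp _ _ _ _ _ _ x (TMu (close x C)) HI HM) as SM.
    apply (contractive _ _ _ _ Hwf _ _ _ _ SA SM x p C); auto.
    + intros Z _ HZ q _ w. unfold upd. apply Nat.eqb_neq in HZ. rewrite HZ. reflexivity.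
    + intros q Hq w. unfold upd. rewrite Nat.eqb_refl. apply IHp; auto.
  - subst d. apply wf_wfk in H0, H1.
    rewrite (u_lat _ _ _ _ _ _ HI); simpl; auto.
    rewrite (u_arr _ _ _ _ _ _ HI); simpl; auto.
    assert (Hl : forall q w, I (TLat A) q w <-> forall s, R q s -> I A s w)
      by (intros; apply (u_lat _ _ _ _ _ _ HI); auto).
    assert (Hl2 : forall q w, I (TLat B) q w <-> forall s, R q s -> I B s w)
      by (intros; apply (u_lat _ _ _ _ _ _ HI); auto).
    assert (Ha : forall q w, I (TArr A B) q w <-> forall s, clos_refl_trans W R q s ->
       forall v, I A s v -> I B s (app w v))
      by (intros; apply (u_arr _ _ _ _ _ _ HI); auto).
    split.
    + intros K r Hr v Hv. rewrite Hl in Hv. rewrite Hl2. intros s Hs.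
      assert (Hps : clos_trans W R p s).
      { destruct (rt_split _ _ _ _ Hr) as [<-|Hc]. constructor; auto. econstructor 2; eauto. constructor; auto. }
      destruct (ct_first _ _ _ _ Hps) as [q [Hpq Hqs]].
      specialize (K q Hpq). rewrite Ha in K. apply K; auto.
    + intros K q Hpq. rewrite Ha. intros q' Hqq' v Hv.
      assert (Hpq' : clos_trans W R p q') by (eapply ct_rt_trans; eauto; constructor; auto).
      destruct (ct_last _ _ _ _ Hpq') as [x [Hpx Hxq']].
      destruct (LL _ _ Hxq') as [r [Hxr [Hrq' Hr]]].
      assert (Hpr : clos_refl_trans W R p r) by (econstructor 3; eauto).
      specialize (K r Hpr v). rewrite Hl, Hl2 in K.
      apply K; auto. intros s Hs. eapply hered_rt; eauto.
Qed.
End Main.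
Section Main2.
Variables (V : Type) (app : V -> V -> V) (W : Type) (R : W -> W -> Prop).
Hypothesis Hwf : well_founded (fun q p => clos_trans W R p q).
Hypothesis LL : locally_linear W R.

Lemma main_sub g A B : sub g A B ->
  forall eta, hereditary R eta -> forall I, is_interp app R eta I ->
  (forall X Y, In (X, Y) g -> forall p v, eta X p v -> eta Y p v) ->
  forall p v, I A p v -> I B p v.
Proof.
  intro H. induction H; intros eta Heta I HI Hg p0 v Hv.
  - apply (u_var _ _ _ _ _ _ HI). apply (u_var _ _ _ _ _ _ HI) in Hv. eauto.
  - apply (u_tv _ _ _ _ _ _ HI); auto using wfk_top.
  - apply (proj1 (teq_sound _ _ _ _ Hwf LL _ _ Heta HI _ _ _ H0 p0 v)); auto.
  - apply (IHsub2 eta Heta I HI); [|apply (IHsub1 eta Heta I HI); auto].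
    + intros X Y HXY. apply Hg. apply H2; auto.
    + intros X Y HXY. apply Hg. apply H2; auto.
  - destruct (sub_wf _ _ _ H).
    rewrite (u_lat _ _ _ _ _ _ HI) in Hv |- *; auto. intros q Hq. eapply IHsub; eauto.
  - destruct (sub_wf _ _ _ H). destruct (sub_wf _ _ _ H0).
    rewrite (u_arr _ _ _ _ _ _ HI) in Hv |- *; auto. intros q Hq w Hw.
    eapply (IHsub2 eta Heta I HI).
    + intros X Y HXY. apply Hg. apply H2; auto.
    + apply Hv; auto. eapply (IHsub1 eta Heta I HI); eauto.
      intros X Y HXY. apply Hg. apply H2; auto.
  -
    destruct (sub_wf _ _ _ H) as [HA HB].
    assert (HXY : X <> Y).
    { destruct H0 as [H0 _]. apply (H0 (X, Y)). apply H1; auto. }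
    set (MA := TMu (close X A)). set (MB := TMu (close Y B)).
    assert (HMA : wfk 0 MA) by (apply wf_wfk; constructor; auto; apply wfk_wf; auto).
    assert (HMB : wfk 0 MB) by (apply wf_wfk; constructor; auto; apply wfk_wf; auto).
    revert v Hv. induction p0 as [p IHp] using (well_founded_induction Hwf). intros v Hv.
    set (eta2 := fun Z => if Nat.eqb Z X then (fun q w => I MA q w /\ I MB q w)
                          else if Nat.eqb Z Y then I MB else eta Z).
    destruct (interp_exists _ app _ _ Hwf eta2) as [I2 HI2].
    assert (He2 : hereditary R eta2).
    { intros Z q q' Hqq' w. unfold eta2.
      destruct (Nat.eqb Z X).
      - intros [K1 K2]. split; eapply heredity; eauto.
      - destruct (Nat.eqb Z Y). eapply heredity; eauto. apply Heta; auto. }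
    assert (Hg2 : forall Z Z', In (Z, Z') g' -> forall q w, eta2 Z q w -> eta2 Z' q w).
    { intros Z Z' HZ q w. apply H1 in HZ. destruct HZ as [HZ|HZ].
      - assert (Z <> X /\ Z <> Y /\ Z' <> X /\ Z' <> Y) as [n1 [n2 [n3 n4]]].
        { repeat split; intro E; subst;
          [apply H2|apply H4|apply H2|apply H4]; eexists; split; eauto; simpl; auto. }
        unfold eta2. apply Nat.eqb_neq in n1, n2, n3, n4. rewrite n1, n2, n3, n4.
        apply Hg; auto.
      - inversion HZ; subst. unfold eta2. rewrite Nat.eqb_refl.
        assert (E : Nat.eqb Y X = false) by (apply Nat.eqb_neq; auto). rewrite E, Nat.eqb_refl.
        tauto. }
    apply (u_mu _ _ _ _ _ _ HI) in Hv; auto. unfold open in Hv. rewrite open_close in Hv; auto.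
    pose proof (subst_interp _ _ _ _ _ _ X MA HI HMA) as SA.
    pose proof (subst_interp _ _ _ _ _ _ Y MB HI HMB) as SB.
    assert (HA2 : I2 A p v).
    { refine (proj1 (contractive _ _ _ _ Hwf _ _ _ _ SA HI2 X p A HA H6 _ _ v) Hv).
      - intros Z HZ HZX q _ w. unfold upd, eta2.
        assert (Z <> Y) by (intro; subst; auto).
        apply Nat.eqb_neq in HZX, H8. rewrite HZX, H8. reflexivity.
      - intros q Hq w. unfold upd, eta2. rewrite Nat.eqb_refl. split; [|tauto].
        intro K; split; [exact K | apply IHp; auto]. }
    assert (HB2 : I2 B p v) by (eapply IHsub; eauto).
    apply (u_mu _ _ _ _ _ _ HI); auto. unfold open. rewrite open_close; auto.
    refine (proj1 (agree _ _ _ _ Hwf _ _ _ _ HI2 SB p B HB _ v) HB2).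
    intros Z HZ q _ w. unfold upd, eta2.
    assert (Z <> X) by (intro; subst; auto).
    apply Nat.eqb_neq in H8. rewrite H8. destruct (Nat.eqb Z Y); reflexivity.
  - apply wf_wfk in H0. apply (proj2 (u_lat _ _ _ _ _ _ HI A p0 v H0)). intros q Hq. eapply heredity; eauto.
Qed.
End Main2.

Theorem theorem5 :
  forall (V : Type) (app : V -> V -> V) (den : lterm -> (nat -> V) -> V),
  syn_lambda_algebra V app den ->
  forall (W : Type) (R : W -> W -> Prop),
  lambdaA_frame W R ->
  forall (eta : nat -> W -> V -> Prop),
  hereditary R eta ->
  forall (I : ty -> W -> V -> Prop),
  is_interp app R eta I ->
  forall (g : assum) (A B : ty),
  sub g A B ->
  (forall X Y, In (X, Y) g -> forall p v, eta X p v -> eta Y p v) ->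
  forall p v, I A p v -> I B p v.
Proof.
  intros V app den _ W R [Hfr LL] eta Heta I HI g A B Hs Hg p v Hv.
  eapply main_sub; eauto. apply frame_wf; auto.
Qed.
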